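(* Let $s$ be a term that reduces to an abstraction $t$ by a reduction sequence $s=s_0\succ\cdots\succ s_j=t$ whose largest term has size $m=\max_i|s_i|$. Then there are a program $P$ and a number $m'$ with $P\gg t$ and $m\le m'\le 2m$ such that the substitution machine reduces $\tau_s$ to $([],[P])$ by a sequence of steps whose largest state has size $m'$.
   Context: Terms (de Bruijn): $s::=n\mid st\mid\lambda s$, size $|n|=1+n$, $|\lambda s|=1+|s|$, $|st|=1+|s|+|t|$. Term substitution: $k^k_u=u$, $n^k_u=n$ ($n\ne k$), $(st)^k_u=(s^k_u)(t^k_u)$, $(\lambda s)^k_u=\lambda(s^{k+1}_u)$. Reduction $\succ$: $(\lambda s)(\lambda t)\succ s^0_{\lambda t}$; $s\succ s'\Rightarrow st\succ s't$; $t\succ t'\Rightarrow(\lambda s)t\succ(\lambda s)t'$. Programs are lists of commands $\mathsf{ret},\mathsf{var}\,n,\mathsf{lam},\mathsf{app}$ with sizes $|\mathsf{var}\,n|=1+n$, $|c|=1$ otherwise, $|P|=1+\sum_{c\in P}|c|$. Compilation: $\gamma n=[\mathsf{var}\,n]$, $\gamma(st)=\gamma s++\gamma t++[\mathsf{app}]$, $\gamma(\lambda s)=\mathsf{lam}::\gamma s++[\mathsf{ret}]$. $P\gg s$ iff $P=\gamma u$ and $s=\lambda u$ for some $u$. $\varphi P:=\varphi_{0,[]}P$ with $\varphi_{0,Q}(\mathsf{ret}::P)=(Q,P)$, $\varphi_{k+1,Q}(\mathsf{ret}::P)=\varphi_{k,Q++[\mathsf{ret}]}P$, $\varphi_{k,Q}(\mathsf{lam}::P)=\varphi_{k+1,Q++[\mathsf{lam}]}P$,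 $\varphi_{k,Q}(c::P)=\varphi_{k,Q++[c]}P$ for $c$ a $\mathsf{var}$ or $\mathsf{app}$, undefined otherwise. Program substitution: $(\mathsf{var}\,k::P)^k_Q=Q++P^k_Q$; $(\mathsf{var}\,n::P)^k_Q=\mathsf{var}\,n::P^k_Q$ ($n\ne k$); $(\mathsf{lam}::P)^k_Q=\mathsf{lam}::P^{k+1}_Q$; $(\mathsf{app}::P)^k_Q=\mathsf{app}::P^k_Q$; $(\mathsf{ret}::P)^0_Q=[\mathsf{ret}]$; $(\mathsf{ret}::P)^{k+1}_Q=\mathsf{ret}::P^k_Q$; $[]^k_Q=[]$. The substitution machine has states $(T,V)$ ($T,V$ lists of programs) and steps: $((\mathsf{lam}::P)::T,V)\succ(P'::_{tc}T,\ Q::V)$ if $\varphi P=(Q,P')$; $((\mathsf{app}::P)::T,\ Q::R::V)\succ(R^0_{\mathsf{lam}::Q++[\mathsf{ret}]}::(P::_{tc}T),\ V)$; where $P::_{tc}T:=T$ if $P=[]$, else $P::T$. Initial state $\tau_s:=([\gamma s],[])$. The size of a state $(T,V)$ is the sum of the sizes of all programs in $T$ and in $V$. *)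

(* Defs.v *)
From Stdlib Require Import List Arith.
Import ListNotations.

Inductive term : Type :=
| tvar (n : nat)
| tapp (s t : term)
| tlam (s : term).

Fixpoint tsize (s : term) : nat :=
  match s with
  | tvar n => 1 + n
  | tlam s => 1 + tsize s
  | tapp s t => 1 + tsize s + tsize t
  end.

Fixpoint tsubst (s : term) (k : nat) (u : term) : term :=
  match s with
  | tvar n => if Nat.eqb n k then u else tvar n
  | tapp s t => tapp (tsubst s k u) (tsubst t k u)
  | tlam s => tlam (tsubst s (S k) u)
  end.

Inductive tstep : term -> term -> Prop :=
| tstep_beta s t : tstep (tapp (tlam s) (tlam t)) (tsubst s 0 (tlam t))
| tstep_appL s s' t : tstep s s' -> tstep (tapp s t) (tapp s' t)
| tstep_appR s t t' : tstep t t' -> tstep (tapp (tlam s) t) (tapp (tlam s) t').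

Inductive cmd : Type :=
| cret
| cvar (n : nat)
| clam
| capp.

Definition program := list cmd.

Definition csize (c : cmd) : nat :=
  match c with
  | cvar n => 1 + n
  | _ => 1
  end.

Definition psize (P : program) : nat := 1 + fold_right (fun c acc => csize c + acc) 0 P.

Fixpoint compile (s : term) : program :=
  match s with
  | tvar n => [cvar n]
  | tapp s t => compile s ++ compile t ++ [capp]
  | tlam s => clam :: compile s ++ [cret]
  end.

Definition represents (P : program) (s : term) : Prop :=
  exists u, P = compile u /\ s = tlam u.

Fixpoint phi_aux (k : nat) (Q : program) (P : program) : option (program * program) :=
  match P with
  | [] => None
  | cret :: P' =>
      match k with
      | 0 => Some (Q, P')
      | S k' => phi_aux k' (Q ++ [cret]) P'
      end
  | clam :: P' => phi_aux (S k) (Q ++ [clam]) P'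
  | c :: P' => phi_aux k (Q ++ [c]) P'
  end.

Definition phi (P : program) : option (program * program) := phi_aux 0 [] P.

Fixpoint psubst (P : program) (k : nat) (Q : program) : program :=
  match P with
  | [] => []
  | cvar n :: P' => if Nat.eqb n k then Q ++ psubst P' k Q else cvar n :: psubst P' k Q
  | clam :: P' => clam :: psubst P' (S k) Q
  | capp :: P' => capp :: psubst P' k Q
  | cret :: P' =>
      match k with
      | 0 => [cret]
      | S k' => cret :: psubst P' k' Q
      end
  end.

Definition state : Type := (list program * list program)%type.

Definition tc_cons (P : program) (T : list program) : list program :=
  match P with
  | [] => T
  | _ => P :: T
  end.

Inductive mstep : state -> state -> Prop :=
| mstep_lam P T V Q P' :
    phi P = Some (Q, P') ->
    mstep ((clam :: P) :: T, V) (tc_cons P' T, Q :: V)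
| mstep_app P T Q R V :
    mstep ((capp :: P) :: T, Q :: R :: V)
          (psubst R 0 (clam :: Q ++ [cret]) :: tc_cons P T, V).

Definition sum_psizes (L : list program) : nat :=
  fold_right (fun P acc => psize P + acc) 0 L.

Definition ssize (st : state) : nat := sum_psizes (fst st) + sum_psizes (snd st).

Definition init_state (s : term) : state := ([compile s], []).

Definition max_size_is {A : Type} (size : A -> nat) (f : nat -> A) (j m : nat) : Prop :=
  (forall i, i <= j -> size (f i) <= m) /\ (exists i, i <= j /\ size (f i) = m).

(* Main.v *)
Require Import Defs.
From Stdlib Require Import List Arith Lia Classical.
Import ListNotations.

Lemma no_step_lam : forall b y, ~ tstep (tlam b) y.
Proof. intros b y H; inversion H. Qed.

Lemma tstep_det : forall x y z, tstep x y -> tstep x z -> y = z.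
Proof.
  intros x y z H; revert z; induction H; intros z Hz; inversion Hz; subst; auto.
  - exfalso; eapply no_step_lam; eauto.
  - exfalso; eapply no_step_lam; eauto.
  - exfalso; eapply no_step_lam; eauto.
  - f_equal; auto.
  - exfalso; eapply no_step_lam; eauto.
  - exfalso; eapply no_step_lam; eauto.
  - exfalso; eapply no_step_lam; eauto.
  - f_equal; auto.
Qed.

Lemma phi_compile : forall s k Q P, phi_aux k Q (compile s ++ P) = phi_aux k (Q ++ compile s) P.
Proof.
  induction s; intros k Q P; simpl.
  - reflexivity.
  - rewrite <- !app_assoc. rewrite IHs1, IHs2. simpl. rewrite !app_assoc. reflexivity.
  - rewrite <- app_assoc. simpl. rewrite IHs. simpl. rewrite <- !app_assoc. reflexivity.
Qed.

Lemma phi_eq : forall b P, phi (compile b ++ cret :: P) = Some (compile b, P).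
Proof. intros. unfold phi. rewrite phi_compile. reflexivity. Qed.

Lemma psubst_compile : forall s k u P,
  psubst (compile s ++ P) k (compile u) = compile (tsubst s k u) ++ psubst P k (compile u).
Proof.
  induction s; intros k u P; simpl.
  - destruct (n =? k); simpl; reflexivity.
  - rewrite <- !app_assoc. rewrite IHs1, IHs2. simpl. rewrite <- ?app_assoc. reflexivity.
  - rewrite <- app_assoc. rewrite IHs. simpl. rewrite <- app_assoc. reflexivity.
Qed.

Lemma compile_head : forall s, exists c P, compile s = c :: P /\ c <> capp.
Proof.
  induction s; simpl.
  - eexists _, _; split; [reflexivity|discriminate].
  - destruct IHs1 as (c & P & E & H). rewrite E. eexists _, _; split; [reflexivity|exact H].
  - eexists _, _; split; [reflexivity|discriminate].
Qed.

Inductive item := IT (s : term) | IA.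
Definition icode (it : item) : program := match it with IT s => compile s | IA => [capp] end.
Definition code (L : list item) : program := flat_map icode L.

Fixpoint run (stk : list term) (L : list item) : option (list term) :=
  match L with
  | [] => Some stk
  | IT s :: L' => run (s :: stk) L'
  | IA :: L' => match stk with t :: s :: stk' => run (tapp s t :: stk') L' | _ => None end
  end.

Lemma norm_item : forall s, exists h M, ((exists n, h = tvar n) \/ (exists b, h = tlam b)) /\
  forall L' stk, code (IT s :: L') = code (IT h :: M ++ L') /\ run stk (IT s :: L') = run stk (IT h :: M ++ L').
Proof.
  induction s.
  - exists (tvar n), []. split; eauto.
  - destruct IHs1 as (h & M & Hh & HM). exists h, (M ++ [IT s2; IA]). split; [exact Hh|].
    intros L' stk. rewrite <- app_assoc. simpl app.
    destruct (HM (IT s2 :: IA :: L') stk) as [E1 E2]. rewrite <- E1, <- E2.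
    split; [|reflexivity]. simpl. rewrite <- !app_assoc. reflexivity.
  - exists (tlam s), []. split; eauto.
Qed.

Inductive frame := FL (t : term) | FR (b : term).
Definition plug fr h := match fr with FL t => tapp h t | FR b => tapp (tlam b) h end.
Fixpoint fill (F : list frame) (h : term) : term :=
  match F with [] => h | fr :: F' => fill F' (plug fr h) end.
Definition islam x := exists b, x = tlam b.

Lemma run_ctx : forall L A h W R, Forall islam W -> run (A ++ h :: W) L = Some R ->
  exists A' F W', R = A' ++ fill F h :: W' /\
    forall h', run (A ++ h' :: W) L = Some (A' ++ fill F h' :: W').
Proof.
  induction L as [|it L IH]; intros A h W R HW Hr.
  - simpl in Hr. inversion Hr; subst. exists A, [], W. split; auto.
  - destruct it as [s|].
    + simpl in Hr. destruct (IH (s :: A) h W R HW Hr) as (A' & F & W' & E & Hh).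
      exists A', F, W'. split; [exact E| intros h'; apply (Hh h')].
    + destruct A as [|t [|s A]].
      * simpl in Hr. destruct W as [|w W0]; [discriminate|].
        inversion HW as [|? ? [b Hb] HW0]; subst.
        destruct (IH [] (tapp (tlam b) h) W0 R HW0 Hr) as (A' & F & W' & E & Hh).
        exists A', (FR b :: F), W'. split; [exact E|]. intros h'. simpl. apply (Hh (tapp (tlam b) h')).
      * simpl in Hr.
        destruct (IH [] (tapp h t) W R HW Hr) as (A' & F & W' & E & Hh).
        exists A', (FL t :: F), W'. split; [exact E|]. intros h'. simpl. apply (Hh (tapp h' t)).
      * simpl in Hr.
        destruct (IH (tapp s t :: A) h W R HW Hr) as (A' & F & W' & E & Hh).
        exists A', F, W'. split; [exact E| intros h'; apply (Hh h')].
Qed.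

Lemma fill_step : forall F h h', tstep h h' -> tstep (fill F h) (fill F h').
Proof.
  induction F as [|[t|b] F IH]; intros h h' H; simpl; auto.
  - apply IH. constructor; auto.
  - apply IH. constructor; auto.
Qed.

Lemma fill_stuck : forall F h, (forall y, ~ tstep h y) -> ~ islam h ->
  (forall y, ~ tstep (fill F h) y) /\ ~ islam (fill F h).
Proof.
  induction F as [|[t|b] F IH]; intros h H1 H2; simpl; auto.
  - apply IH.
    + intros y Hy; inversion Hy; subst; first [apply H2; eexists; reflexivity | eapply H1; eassumption | eapply no_step_lam; eassumption].
    + intros [b' Hb]; discriminate.
  - apply IH.
    + intros y Hy; inversion Hy; subst; first [apply H2; eexists; reflexivity | eapply H1; eassumption | eapply no_step_lam; eassumption].
    + intros [b' Hb]; discriminate.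
Qed.
Fixpoint csum (P : program) : nat := match P with [] => 0 | c :: P' => csize c + csum P' end.
Lemma psize_csum : forall P, psize P = 1 + csum P.
Proof. induction P; simpl; auto. Qed.
Lemma fr_csum : forall P, fold_right (fun c acc => csize c + acc) 0 P = csum P.
Proof. induction P; simpl; auto. Qed.
Lemma csum_app : forall A B, csum (A ++ B) = csum A + csum B.
Proof. induction A; simpl; intros; auto. rewrite IHA; lia. Qed.

Lemma compile_bounds : forall s, tsize s <= csum (compile s) /\ csum (compile s) + 1 <= 2 * tsize s.
Proof.
  induction s; simpl; rewrite ?csum_app; simpl; try lia.
Qed.

Definition isize (it : item) : nat := match it with IT s => tsize s | IA => 1 end.
Fixpoint isum (L : list item) : nat := match L with [] => 0 | it :: L' => isize it + isum L' end.
Lemma isum_app : forall A B, isum (A ++ B) = isum A + isum B.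
Proof. induction A; simpl; intros; auto. rewrite IHA; lia. Qed.

Lemma code_bounds : forall L, isum L <= csum (code L) /\ csum (code L) + length L <= 2 * isum L.
Proof.
  induction L as [|[s|] L IH]; simpl; auto; rewrite ?csum_app; simpl.
  - pose proof (compile_bounds s). lia.
  - lia.
Qed.

Fixpoint sumt (l : list term) : nat := match l with [] => 0 | x :: l' => tsize x + sumt l' end.

Lemma run_size : forall L stk R, run stk L = Some R -> sumt R = sumt stk + isum L.
Proof.
  induction L as [|[s|] L IH]; intros stk R H; simpl in *.
  - inversion H; lia.
  - rewrite (IH _ _ H). simpl. lia.
  - destruct stk as [|t [|s stk]]; try discriminate. rewrite (IH _ _ H). simpl. lia.
Qed.

Definition Dec (st : state) (x : term) : Prop :=
  exists Ls us, fst st = map code Ls /\ Forall (fun L => L <> []) Ls /\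
    snd st = map compile us /\ run (map tlam us) (concat Ls) = Some [x].

Lemma T_bounds : forall Ls, Forall (fun L => L <> []) Ls ->
  isum (concat Ls) <= sum_psizes (map code Ls) /\ sum_psizes (map code Ls) <= 2 * isum (concat Ls).
Proof.
  induction Ls as [|L Ls IH]; intros H; simpl; auto.
  inversion H; subst. destruct (IH H3). rewrite isum_app, fr_csum.
  pose proof (code_bounds L). destruct L; [congruence|]. simpl length in *. lia.
Qed.

Lemma V_bounds : forall us,
  sumt (map tlam us) <= sum_psizes (map compile us) /\ sum_psizes (map compile us) <= 2 * sumt (map tlam us).
Proof.
  induction us as [|u us IH]; simpl; auto. rewrite fr_csum.
  pose proof (compile_bounds u). lia.
Qed.

Lemma Dec_size : forall st x, Dec st x -> tsize x <= ssize st /\ ssize st <= 2 * tsize x.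
Proof.
  intros [T V] x (Ls & us & HT & HLs & HV & Hr). simpl in *. subst.
  apply run_size in Hr. simpl in Hr. unfold ssize; simpl.
  pose proof (T_bounds Ls HLs). pose proof (V_bounds us). lia.
Qed.

Definition stepf (st : state) : state :=
  match st with
  | ((clam :: P) :: T, V) => match phi P with Some (Q, P') => (tc_cons P' T, Q :: V) | None => st end
  | ((capp :: P) :: T, Q :: R :: V) => (psubst R 0 (clam :: Q ++ [cret]) :: tc_cons P T, V)
  | _ => st
  end.

Lemma stepf_lam : forall P T V Q P', phi P = Some (Q, P') -> stepf ((clam :: P) :: T, V) = (tc_cons P' T, Q :: V).
Proof. intros. cbv delta [stepf] beta iota. rewrite H. reflexivity. Qed.

Definition tcount (st : state) : nat := fold_right (fun P a => length P + a) 0 (fst st).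

Lemma code_nil : forall L, code L = [] -> L = [].
Proof.
  intros [|[s|] L]; simpl; auto; intros H; [|discriminate].
  destruct (compile_head s) as (c & P & E & _). rewrite E in H. discriminate.
Qed.

Definition tcL (L : list item) (Ls : list (list item)) := match L with [] => Ls | _ => L :: Ls end.

Lemma tc_code : forall L Ls, tc_cons (code L) (map code Ls) = map code (tcL L Ls).
Proof.
  intros [|it L] Ls; [reflexivity|].
  change (tcL (it :: L) Ls) with ((it :: L) :: Ls).
  change (map code ((it::L)::Ls)) with (code (it::L) :: map code Ls).
  destruct (code (it :: L)) eqn:E. apply code_nil in E; discriminate. reflexivity.
Qed.

Lemma concat_tcL : forall L Ls, concat (tcL L Ls) = L ++ concat Ls.
Proof. intros [|it L] Ls; reflexivity. Qed.

Lemma Forall_tcL : forall L Ls, Forall (fun L => L <> []) Ls -> Forall (fun L => L <> []) (tcL L Ls).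
Proof. intros [|it L] Ls H; simpl; auto. constructor; [discriminate|auto]. Qed.

Lemma Forall_lam : forall us, Forall islam (map tlam us).
Proof. induction us; simpl; constructor; auto. eexists; reflexivity. Qed.

Lemma single_eq : forall (x y : term) A W, [x] = A ++ y :: W -> A = [] /\ W = [] /\ x = y.
Proof.
  intros x y [|a [|a' A]] W H; simpl in H; inversion H; auto.
Qed.

Lemma core : forall T V x, Dec (T, V) x -> T <> [] ->
  (mstep (T,V) (stepf (T,V)) /\ Dec (stepf (T,V)) x /\ tcount (stepf (T,V)) < tcount (T,V))
  \/ (mstep (T,V) (stepf (T,V)) /\ exists x', Dec (stepf (T,V)) x' /\ tstep x x')
  \/ ((forall y, ~ tstep x y) /\ ~ islam x).
Proof.
  intros T V x (Ls & us & HT & HLs & HV & Hrun) HTn. simpl in *. subst.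
  destruct Ls as [|L1 Ls]; [contradiction|].
  inversion HLs as [|? ? HL1 HLs']; subst.
  destruct L1 as [|it L1]; [contradiction|].
  assert (exists it' L1', code (it :: L1) = code (it' :: L1') /\
     run (map tlam us) (concat ((it :: L1) :: Ls)) = run (map tlam us) (concat ((it' :: L1') :: Ls)) /\
     (it' = IA \/ (exists n, it' = IT (tvar n)) \/ exists b, it' = IT (tlam b))) as Hn.
  { destruct it as [s|].
    - destruct (norm_item s) as (h & M & Hh & HM). exists (IT h), (M ++ L1).
      destruct (HM L1 (map tlam us)) as [E1 _].
      destruct (HM (L1 ++ concat Ls) (map tlam us)) as [_ E2].
      split; [exact E1|split].
      + simpl concat. simpl app. rewrite E2. rewrite app_assoc. reflexivity.
      + destruct Hh as [[n ->]|[b ->]]; eauto.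
    - exists IA, L1. auto. }
  destruct Hn as (it' & L1' & Ecode & Erun & Hit). change (map code ((it :: L1) :: Ls)) with (code (it :: L1) :: map code Ls). rewrite Ecode. rewrite Erun in Hrun.
  clear HTn Ecode Erun it L1 HL1 HLs.
  destruct Hit as [->|[[n ->]|[b ->]]].
  - simpl in Hrun. destruct us as [|q [|r us]]; simpl in Hrun; try discriminate.
    right; left. simpl. split; [constructor|].
    destruct (run_ctx (L1' ++ concat Ls) [] _ _ _ (Forall_lam us) Hrun) as (A' & F & W' & E & Hh).
    apply single_eq in E. destruct E as (-> & -> & ->).
    exists (fill F (tsubst r 0 (tlam q))). split.
    + exists ([IT (tsubst r 0 (tlam q))] :: tcL L1' Ls), us. simpl. repeat split.
      * rewrite tc_code. f_equal. 
        change (clam :: compile q ++ [cret]) with (compile (tlam q)).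
        pose proof (psubst_compile r 0 (tlam q) []) as P. rewrite !app_nil_r in P. simpl in P. rewrite app_nil_r; exact P.
      * constructor; [discriminate|]. apply Forall_tcL; auto.
      * rewrite concat_tcL. specialize (Hh (tsubst r 0 (tlam q))). simpl in Hh. exact Hh.
    + apply fill_step. constructor.
  - simpl in Hrun. right; right.
    destruct (run_ctx (L1' ++ concat Ls) [] _ _ _ (Forall_lam us) Hrun) as (A' & F & W' & E & Hh).
    apply single_eq in E. destruct E as (-> & -> & ->). apply fill_stuck.
    + intros y Hy; inversion Hy.
    + intros [b Hb]; discriminate.
  - left.
    assert (Ec : code (IT (tlam b) :: L1') = clam :: compile b ++ cret :: code L1')
      by (simpl; rewrite <- app_assoc; reflexivity).
    rewrite Ec. rewrite (phi_eq b (code L1')).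
    split; [constructor; apply phi_eq|split].
    + exists (tcL L1' Ls), (b :: us). simpl. rewrite tc_code. repeat split; auto.
      * apply Forall_tcL; auto.
      * rewrite concat_tcL. exact Hrun.
    + unfold tcount; simpl. rewrite tc_code. 
      assert (forall L Ls, fold_right (fun P a => length P + a) 0 (map code (tcL L Ls)) =
               length (code L) + fold_right (fun P a => length P + a) 0 (map code Ls)) as Hf
        by (intros [|? ?] ?; reflexivity).
      rewrite Hf. rewrite length_app. simpl. lia.
Qed.
Definition gs (s : term) (n : nat) : state := Nat.iter n stepf (init_state s).

Lemma init_dec : forall s, Dec (init_state s) s.
Proof.
  intros s. exists [[IT s]], []. simpl. rewrite app_nil_r. repeat split; auto.
  constructor; [discriminate|constructor].
Qed.

Definition RS (f : nat -> term) (j : nat) :=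
  (forall i, i < j -> tstep (f i) (f (S i))) /\ islam (f j).

Lemma not_stuck : forall f j i, RS f j -> i <= j -> ~ ((forall y, ~ tstep (f i) y) /\ ~ islam (f i)).
Proof.
  intros f j i [H1 H2] Hi [S1 S2].
  destruct (Nat.eq_dec i j) as [->|Hne]; [auto|]. apply (S1 (f (S i))). apply H1. lia.
Qed.

Lemma step_idx : forall f j i x, RS f j -> i <= j -> tstep (f i) x -> i < j /\ x = f (S i).
Proof.
  intros f j i x [H1 [b Hb]] Hi Hx.
  destruct (Nat.eq_dec i j) as [->|Hne].
  - rewrite Hb in Hx. exfalso; eapply no_step_lam; eauto.
  - split; [lia|]. eapply tstep_det; eauto. apply H1; lia.
Qed.

Lemma adv : forall f j i st, RS f j -> i <= j -> Dec st (f i) -> fst st <> [] ->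
  (mstep st (stepf st) /\ Dec (stepf st) (f i) /\ tcount (stepf st) < tcount st)
  \/ (mstep st (stepf st) /\ i < j /\ Dec (stepf st) (f (S i))).
Proof.
  intros f j i [T V] HR Hi HD HT. simpl in HT.
  destruct (core T V (f i) HD HT) as [H|[[Hm [x' [HD' Hx]]]|H]].
  - left; exact H.
  - right. destruct (step_idx f j i x' HR Hi Hx) as [Hlt ->]. auto.
  - exfalso. eapply not_stuck; eauto.
Qed.

Lemma stepf_final : forall V, stepf ([], V) = ([], V).
Proof. reflexivity. Qed.

Lemma final_dec : forall V x, Dec ([], V) x -> exists u, V = [compile u] /\ x = tlam u.
Proof.
  intros V x (Ls & us & HT & HLs & HV & Hr). simpl in *.
  destruct Ls; [|discriminate]. simpl in Hr. inversion Hr.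
  destruct us as [|u [|u' us]]; simpl in *; try discriminate.
  inversion H0. subst. eauto.
Qed.

Lemma inv_all : forall s f j, f 0 = s -> RS f j -> forall n, exists i, i <= j /\ Dec (gs s n) (f i).
Proof.
  intros s f j H0 HR n. induction n as [|n IH].
  - exists 0. split; [lia|]. rewrite H0. apply init_dec.
  - destruct IH as (i & Hi & HD). change (gs s (S n)) with (stepf (gs s n)).
    destruct (gs s n) as [T V] eqn:E. destruct T as [|P T].
    + exists i. rewrite stepf_final. auto.
    + destruct (adv f j i (P :: T, V) HR Hi HD ltac:(discriminate)) as [(_&H&_)|(_&Hl&H)].
      * eauto.
      * exists (S i). split; [lia|auto].
Qed.

Lemma terminates : forall s f j, RS f j -> forall d c n i, i <= j -> j - i <= d -> tcount (gs s n) <= c ->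
  Dec (gs s n) (f i) -> exists k, fst (gs s k) = [].
Proof.
  intros s f j HR d. induction d as [|d IHd]; intros c; induction c as [|c IHc]; intros n i Hi Hd Hc HD;
  (destruct (fst (gs s n)) eqn:Ef; [exists n; exact Ef|]);
  (destruct (adv f j i (gs s n) HR Hi HD ltac:(rewrite Ef; discriminate)) as [(_&H&Hlt)|(_&Hl&H)]);
  change (stepf (gs s n)) with (gs s (S n)) in *.
  - lia.
  - lia.
  - apply (IHc (S n) i); auto. lia.
  - lia.
  - lia.
  - apply (IHd (tcount (gs s (S n))) (S n) (S i)); auto; lia.
  - apply (IHc (S n) i); auto. lia.
  - apply (IHd (tcount (gs s (S n))) (S n) (S i)); auto; lia.
Qed.

Lemma least : forall (P : nat -> Prop) n, P n -> exists k, P k /\ forall m, m < k -> ~ P m.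
Proof.
  intros P n. induction n as [n IH] using lt_wf_ind. intros Hn.
  destruct (classic (exists m, m < n /\ P m)) as [(m & Hm & HPm)|Hno].
  - exact (IH m Hm HPm).
  - exists n. split; auto. intros m Hm HPm. apply Hno; eauto.
Qed.

Fixpoint maxf (h : nat -> nat) (k : nat) : nat :=
  match k with 0 => h 0 | S k' => Nat.max (maxf h k') (h (S k')) end.

Lemma maxf_ge : forall h k i, i <= k -> h i <= maxf h k.
Proof.
  intros h k; induction k as [|k IH]; intros i Hi; simpl.
  - assert (i = 0) by lia; subst; lia.
  - destruct (Nat.eq_dec i (S k)) as [->|Hne]; [lia|]. specialize (IH i ltac:(lia)). lia.
Qed.

Lemma maxf_att : forall h k, exists i, i <= k /\ h i = maxf h k.
Proof.
  intros h k; induction k as [|k IH]; simpl.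
  - exists 0; auto.
  - destruct IH as (i & Hi & E). destruct (Nat.le_ge_cases (maxf h k) (h (S k))).
    + exists (S k). split; [lia|]. lia.
    + exists i. split; [lia|]. lia.
Qed.

Lemma cover_aux : forall s f j k, RS f j -> fst (gs s k) = [] ->
  (forall m, m < k -> fst (gs s m) <> []) ->
  forall d n i, k - n <= d -> n <= k -> i < j -> Dec (gs s n) (f i) ->
  exists n', n' <= k /\ Dec (gs s n') (f (S i)).
Proof.
  intros s f j k HR Hk Hmin d. induction d as [|d IH]; intros n i Hd Hn Hi HD;
  (destruct (Nat.eq_dec n k) as [->|Hne];
   [ destruct (gs s k) as [T V] eqn:E; simpl in Hk; subst T;
     destruct (final_dec V (f i) HD) as (u & _ & Hu);
     exfalso; apply (no_step_lam u (f (S i))); rewrite <- Hu; apply (proj1 HR); exact Hi | ]).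
  - lia.
  - destruct (adv f j i (gs s n) HR ltac:(lia) HD (Hmin n ltac:(lia))) as [(_&H&_)|(_&_&H)];
    change (stepf (gs s n)) with (gs s (S n)) in *.
    + apply (IH (S n) i); auto; lia.
    + exists (S n); split; auto; lia.
Qed.

Lemma cover : forall s f j k, f 0 = s -> RS f j -> fst (gs s k) = [] ->
  (forall m, m < k -> fst (gs s m) <> []) ->
  forall i, i <= j -> exists n, n <= k /\ Dec (gs s n) (f i).
Proof.
  intros s f j k H0 HR Hk Hmin i. induction i as [|i IH]; intros Hi.
  - exists 0. split; [lia|]. rewrite H0. apply init_dec.
  - destruct (IH ltac:(lia)) as (n & Hn & HD).
    apply (cover_aux s f j k HR Hk Hmin (k - n) n i); auto; lia.
Qed.

Theorem theorem15 :
  forall (s t : term) (j : nat) (f : nat -> term) (m : nat),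
    f 0 = s ->
    f j = t ->
    (forall i, i < j -> tstep (f i) (f (S i))) ->
    (exists u, t = tlam u) ->
    max_size_is tsize f j m ->
    exists (P : program) (m' : nat),
      represents P t /\ m <= m' /\ m' <= 2 * m /\
      exists (k : nat) (g : nat -> state),
        g 0 = init_state s /\
        g k = ([], [P]) /\
        (forall i, i < k -> mstep (g i) (g (S i))) /\
        max_size_is ssize g k m'.
Proof.
  intros s t j f m H0 Hj Hs Ht [Hm1 (i0 & Hi0 & Hm2)].
  assert (HR : RS f j) by (split; [exact Hs| rewrite Hj; exact Ht]).
  destruct (terminates s f j HR j (tcount (gs s 0)) 0 0 ltac:(lia) ltac:(lia) ltac:(lia)
             ltac:(rewrite H0; apply init_dec)) as [k0 Hk0].
  destruct (least (fun k => fst (gs s k) = []) k0 Hk0) as (k & Hk & Hmin).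
  destruct (inv_all s f j H0 HR k) as (i & Hi & HD).
  destruct (gs s k) as [T V] eqn:Egk. simpl in Hk. subst T.
  destruct (final_dec V (f i) HD) as (u & -> & Hu).
  assert (i = j).
  { destruct (Nat.eq_dec i j); auto. exfalso. apply (no_step_lam u (f (S i))). rewrite <- Hu. apply Hs. lia. }
  subst i. clear Hi.
  exists (compile u), (maxf (fun n => ssize (gs s n)) k).
  split; [exists u; split; congruence|].
  split.
  { destruct (cover s f j k H0 HR ltac:(rewrite Egk; reflexivity)
      ltac:(intros m0 Hm0 E; exact (Hmin m0 Hm0 E)) i0 Hi0) as (n & Hn & HDn).
    pose proof (Dec_size _ _ HDn). pose proof (maxf_ge (fun n => ssize (gs s n)) k n Hn). simpl in *. lia. }
  split.
  { destruct (maxf_att (fun n => ssize (gs s n)) k) as (n & Hn & E). rewrite <- E.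
    destruct (inv_all s f j H0 HR n) as (i & Hi & HDn).
    pose proof (Dec_size _ _ HDn). pose proof (Hm1 i Hi). lia. }
  exists k, (gs s). split; [reflexivity|]. split; [exact Egk|]. split.
  - intros i Hi. destruct (inv_all s f j H0 HR i) as (i' & Hi' & HDi).
    assert (Hne : fst (gs s i) <> []) by (intros E; exact (Hmin i Hi E)).
    destruct (adv f j i' (gs s i) HR Hi' HDi Hne) as [(Hm&_)|(Hm&_)]; exact Hm.
  - split.
    + intros i1 Hi1. apply (maxf_ge (fun n => ssize (gs s n))). exact Hi1.
    + apply maxf_att.
Qed.
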